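(* In the setting of the context, suppose moreover that $B_{0,w}\le 2^{-l}\binom{n}{w}$ for all $w$ with $d_0\le w\le n$ (binomial weight distribution). Then $$P(E=0)\le 2^{-l}(1+\beta)^n,\qquad\text{equivalently}\qquad \log_2 P(E=0)\le n\bigl\{R-\bigl(1-\log_2(1+\beta)\bigr)\bigr\}\ \text{ when } l=n-k,\ R=k/n.$$
   Context: All arithmetic is over $\mathrm{GF}(2)$. $G_0$ is a fixed $n\times l$ binary matrix, $G_1$ a fixed $n\times k$ binary matrix, $\mathbf m\in\{0,1\}^k$ fixed. $\mathcal C_0^{\perp}=\{\mathbf x\in\{0,1\}^n: G_0^T\mathbf x=\mathbf 0\}$; $B_{0,w}$ is the number of vectors of Hamming weight $w$ in $\mathcal C_0^\perp$, and $d_0$ is the minimum Hamming weight of a nonzero vector of $\mathcal C_0^\perp$. Defect model: each of the $n$ memory cells is independently defective with probability $\beta\in(0,1)$; a defective cell is stuck at $0$ or at $1$, each with probability $1/2$, independently. Let $\mathcal U$ be the set of defect positions and $\mathbf s^{\mathcal U}$ the vector of stuck-at values. For a matrix $M$ (resp. vector $\mathbf v$) with rows indexed by $\{1,\dots,n\}$, $M^{\mathcal U}$ (resp. $\mathbf v^{\mathcal U}$) denotes the rows indexed by $\mathcal U$. Encoding: with $\mathbf b^{\mathcal U}=(G_1\mathbf m)^{\mathcal U}+\mathbf s^{\mathcal U}$, look for $\mathbf d\in\{0,1\}^l$ with $G_0^{\mathcal U}\mathbf d=\mathbf b^{\mathcal U}$; $E=1$ if such $\mathbf d$ exists and $E=0$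 (encoding failure) otherwise. (For the binary defect channel alone, the total redundancy is $l=n-k$.) *)

(* Defs.v *)
From HB Require Import structures.
From mathcomp Require Import all_boot all_order all_algebra.
Set Implicit Arguments. Unset Strict Implicit. Unset Printing Implicit Defensive.
Import Order.TTheory GRing.Theory Num.Theory.
Local Open Scope ring_scope.

Definition wt n (x : 'cV['F_2]_n) : nat := #|[set i | x i 0 != 0]|.

Definition C0perp n l (G0 : 'M['F_2]_(n, l)) : {set 'cV['F_2]_n} :=
  [set x | G0^T *m x == 0].

Definition B0 n l (G0 : 'M['F_2]_(n, l)) (w : nat) : nat :=
  #|[set x in C0perp G0 | wt x == w]|.

(* d_0: minimum weight of a nonzero vector of C_0^perp
   (convention: n.+1 if C_0^perp = {0}, making the hypothesis vacuous). *)
Definition d0 n l (G0 : 'M['F_2]_(n, l)) : nat :=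
  \big[minn/n.+1]_(x in C0perp G0 | x != 0) wt x.

(* A defect pattern: for each cell, None = not defective,
   Some b = defective and stuck at b. *)
Definition defect n := {ffun 'I_n -> option bool}.

Definition stuck_val (b : bool) : 'F_2 := if b then 1 else 0.

(* Probability of a defect pattern: each cell independently defective with
   probability beta, stuck at 0 / 1 with probability 1/2 each. *)
Definition defect_prob (R : realFieldType) (beta : R) n (u : defect n) : R :=
  \prod_(i < n) (if u i is Some _ then beta / 2 else 1 - beta).

(* E = 1: there is d with G_0^U d = (G_1 m)^U + s^U. *)
Definition encodable n l k (G0 : 'M['F_2]_(n, l)) (G1 : 'M['F_2]_(n, k))
  (m : 'cV['F_2]_k) (u : defect n) : bool :=
  [exists d : 'cV['F_2]_l, [forall i : 'I_n,
     if u i is Some s then (G0 *m d) i 0 == (G1 *m m) i 0 + stuck_val s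
     else true]].

Definition P_fail (R : realFieldType) (beta : R) n l k (G0 : 'M['F_2]_(n, l))
  (G1 : 'M['F_2]_(n, k)) (m : 'cV['F_2]_k) : R :=
  \sum_(u : defect n | ~~ encodable G0 G1 m u) defect_prob beta u.

(* Main.v *)
Require Import Defs.
From HB Require Import structures.
From mathcomp Require Import all_boot all_order all_algebra.
From mathcomp Require Import zify.
Import Order.TTheory GRing.Theory Num.Theory.
Set Implicit Arguments. Unset Strict Implicit.
Local Open Scope ring_scope.

Lemma encodable_of n l k (G0 : 'M['F_2]_(n, l)) (G1 : 'M['F_2]_(n, k))
  (m : 'cV['F_2]_k) (u : defect n) :
  (forall x : 'cV['F_2]_n, x \in C0perp G0 ->
     (forall i, x i 0 != 0 -> u i != None) -> x = 0) ->
  encodable G0 G1 m u.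
Proof.
move=> H.
pose r : 'rV['F_2]_n := \row_i (if u i is Some _ then 1 else 0).
pose D := diag_mx r.
pose c : 'rV['F_2]_n := \row_i (if u i is Some s then (G1 *m m) i 0 + stuck_val s else 0).
have kerD : (kermx (D *m G0) *m D = 0)%R.
  apply/matrixP => i j.
  pose y := (row i (kermx (D *m G0) *m D))^T.
  have Hy : y \in C0perp G0.
    rewrite inE /y -trmx_mul row_mul -mulmxA -row_mul mulmx_ker.
    by apply/eqP/matrixP => a b; rewrite !mxE.
  have := H y Hy.
  have Hs : forall i0, y i0 0 != 0 -> u i0 != None.
    move=> i0; rewrite /y mul_mx_diag !mxE.
    by case: (u i0) => // ; set z := (\sum_j0 _); rewrite [z * _](mulr0 z) eqxx.
  move=> /(_ Hs) /(congr1 (fun M : 'cV['F_2]_n => M j 0)).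
  rewrite {1}/y [_^T j 0]mxE.
  set M := (kermx _ *m D).
  have -> : row i M 0 j = M i j by rewrite mxE.
  by move=> ->; rewrite !mxE; reflexivity.
have sK : (kermx (D *m G0) <= kermx D)%MS by apply/sub_kermxP.
have rk : (\rank D <= \rank (D *m G0))%N.
  have := mxrankS sK; rewrite !mxrank_ker.
  have := rank_leq_row D; have := rank_leq_row (D *m G0). lia.
pose A := G0^T *m D.
have sAD : (A <= D)%MS by apply: submxMl.
have rA : \rank A = \rank (D *m G0) by rewrite -mxrank_tr trmx_mul trmxK tr_diag_mx.
have sDA : (D <= A)%MS.
  by rewrite -(geq_leqif (mxrank_leqif_sup sAD)) rA.
have /submxP [d' Ed] : (c *m D <= A)%MS by apply: submx_trans (submxMl _ _) sDA.
apply/existsP; exists d'^T; apply/forallP => i.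
case Eu: (u i) => [s|] //.
have := congr1 (fun M : 'rV['F_2]_n => M 0 i) Ed.
rewrite /A mulmxA /D !mul_mx_diag !mxE Eu.
rewrite !mulr1 => ->; apply/eqP; apply: eq_bigr => j _; rewrite !mxE mulrC.
reflexivity.
Qed.

Lemma sum_opt (R : realFieldType) (F : option bool -> R) :
  \sum_(j : option bool) F j = F None + (F (Some true) + F (Some false)).
Proof.
rewrite (bigD1 None) //= (bigD1 (Some true)) //= (bigD1 (Some false)) //=.
by rewrite big_pred0 ?addr0 // => -[[]|].
Qed.

Definition gw (R : realFieldType) (beta : R) n (x : 'cV['F_2]_n) (i : 'I_n)
  (j : option bool) : R :=
  if x i 0 != 0 then (if j is Some _ then beta / 2 else 0)
  else (if j is Some _ then beta / 2 else 1 - beta).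
Arguments gw {R} beta {n} x i j.

Lemma sum_gw (R : realFieldType) (beta : R) n (x : 'cV['F_2]_n) :
  \sum_(u : defect n) \prod_i gw beta x i (u i) = beta ^+ wt x.
Proof.
rewrite -(bigA_distr_bigA (fun i j => gw beta x i j)).
rewrite (eq_bigr (fun i => if x i 0 != 0 then beta else 1)); last first.
  move=> i _; rewrite sum_opt /gw; case: ifP => _.
    by rewrite add0r -splitr.
  by rewrite -splitr subrK.
by rewrite -big_mkcond prodr_const /wt cardsE.
Qed.

Lemma gw_ge0 (R : realFieldType) (beta : R) n (x : 'cV['F_2]_n) i j :
  0 <= beta <= 1 -> 0 <= gw beta x i j.
Proof.
move=> /andP [b0 b1]; rewrite /gw.
have h2 : 0 <= beta / 2 by rewrite divr_ge0 // ler0n.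
by case: ifP => _; case: j => [_|] //; rewrite subr_ge0.
Qed.

Lemma d0_le n l (G0 : 'M['F_2]_(n, l)) x :
  x \in C0perp G0 -> x != 0 -> (d0 G0 <= wt x)%N.
Proof.
move=> Hx Hn; rewrite /d0.
have : x \in index_enum 'cV['F_2]_n by rewrite mem_index_enum.
have : (x \in C0perp G0) && (x != 0) by rewrite Hx Hn.
elim: (index_enum _) => //= y s IH Px; rewrite inE big_cons.
case/orP => [/eqP <- | xs]; first by rewrite Px geq_minl.
by case: ifP => _; [rewrite geq_min IH ?orbT | exact: IH].
Qed.

Lemma wt_le n (x : 'cV['F_2]_n) : (wt x < n.+1)%N.
Proof. by rewrite ltnS /wt; apply: leq_trans (max_card _) _; rewrite card_ord. Qed.

Theorem corollary2 (R : realFieldType) (n l k : nat)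
  (G0 : 'M['F_2]_(n, l)) (G1 : 'M['F_2]_(n, k)) (m : 'cV['F_2]_k) (beta : R) :
  0 < beta -> beta < 1 ->
  (forall w : nat, (d0 G0 <= w <= n)%N ->
     (B0 G0 w)%:R <= (2 ^+ l)^-1 * ('C(n, w))%:R :> R) ->
  P_fail beta G0 G1 m <= (2 ^+ l)^-1 * (1 + beta) ^+ n.
Proof.
move=> b0 b1 HB.
have b01 : 0 <= beta <= 1 by rewrite !ltW.
pose P := fun x : 'cV['F_2]_n => (x \in C0perp G0) && (x != 0).
have step1 : P_fail beta G0 G1 m <=
    \sum_(u : defect n) \sum_(x | P x) \prod_i gw beta x i (u i).
  rewrite /P_fail big_mkcond /=; apply: ler_sum => u _.
  case: ifP => NE; last by apply: sumr_ge0 => x _; apply: prodr_ge0 => i _; by apply: gw_ge0.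
  have : ~~ [forall x : 'cV['F_2]_n, (x \in C0perp G0) ==>
       [forall i, (x i 0 != 0) ==> (u i != None)] ==> (x == 0)].
    apply: contra NE => /forallP H; apply: encodable_of => x Hx Hs.
    apply/eqP; move: (H x); rewrite Hx /= => /implyP; apply.
    by apply/forallP => i; apply/implyP; apply: Hs.
  rewrite negb_forall => /existsP [x]; rewrite negb_imply => /andP [Hx].
  rewrite negb_imply => /andP [/forallP Hs Hx0].
  rewrite (bigD1 x) /P ?Hx ?Hx0 //=.
  have -> : \prod_i gw beta x i (u i) = defect_prob beta u.
    apply: eq_bigr => i _; rewrite /gw; case: ifP => // Hi.
    by move: (Hs i); rewrite Hi /=; case: (u i).
  rewrite lerDl. apply: sumr_ge0 => y _; apply: prodr_ge0 => i _; by apply: gw_ge0.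
apply: (le_trans step1); rewrite exchange_big /=.
rewrite (eq_bigr (fun x : 'cV['F_2]_n => beta ^+ wt x)); last by move=> x _; apply: sum_gw.
have step2 : \sum_(x | P x) beta ^+ wt x =
   \sum_(w < n.+1) beta ^+ w *+ #|[pred x | P x && (wt x == w)]|.
  rewrite (eq_bigr (fun x => \sum_(w < n.+1) if wt x == w then beta ^+ w else 0)); last first.
    move=> x _; rewrite -big_mkcond /=.
    rewrite (big_pred1 (Ordinal (wt_le x))) // => w.
  rewrite exchange_big /=; apply: eq_bigr => w _.
  by rewrite -big_mkcondr /= -sumr_const.
rewrite step2.
rewrite [1 + beta]addrC [(beta + 1) ^+ n]exprD1n mulr_sumr; apply: ler_sum => w _.
rewrite -(mulr_natr (beta ^+ w)) -(mulr_natr (beta ^+ w)) mulrCA [beta ^+ w * _]mulrC [X in _ <= X]mulrC.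
apply: ler_wpM2r; first by rewrite exprn_ge0 // ltW.
case: (ltnP w (d0 G0)) => hw.
  have -> : #|[pred x | P x & wt x == w]| = 0%N.
    apply: eq_card0 => x; rewrite !inE /P.
    apply/negP => /andP [/andP [Hx Hx0] /eqP Ew].
    by have := d0_le Hx Hx0; rewrite Ew leqNgt hw.
  by rewrite mulr_ge0 ?invr_ge0 ?exprn_ge0 ?ler0n.
apply: le_trans (HB w _); last by rewrite hw -ltnS ltn_ord.
rewrite ler_nat /B0; apply: subset_leq_card; apply/subsetP => x.
by rewrite !inE /P => /andP [/andP [Hx _] ->]; move: Hx; rewrite inE => ->.
Qed.
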